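(* Let $f:\mathrm{GF}(p^m)^n\to\mathrm{GF}(p^m)$ be a polynomial function and $I=\{i_1,\ldots,i_k\}\subseteq\{1,\ldots,n\}$. Write $t_I=x_{i_1}\cdots x_{i_k}$ and $f = t_I f_{S(I)} + r$ where every monomial of $r$ misses at least one variable $x_i$ with $i\in I$. Let $\mathbf{v}$ denote the $n$-tuple with $1$ in positions $i_1,\ldots,i_k$ and the indeterminates $x_j$ in the other positions, and $\mathbf{u}$ the $n$-tuple with $0$ in positions $i_1,\ldots,i_k$ and indeterminates elsewhere. Define \[ f_I = \sum_{(b_1,\ldots,b_k)\in\{0,1\}^k} (-1)^{k-(b_1+\cdots+b_k)} f|_{x_{i_1}=b_1,\ldots,x_{i_k}=b_k}, \] a function of the variables $x_j$, $j\notin I$. Then \[ f_I = (\Delta^{(k)}_{\mathbf{e}_{i_1},\ldots,\mathbf{e}_{i_k}} f)(\mathbf{u}) = f_{S(I)}(\mathbf{v}). \]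
   Context: Every function $\mathrm{GF}(q)^n\to\mathrm{GF}(q)$ is represented uniquely by a polynomial of degree at most $q-1$ in each variable; the decomposition $f=t_If_{S(I)}+r$ refers to this representative ($f_{S(I)}$ may involve the variables with index in $I$). $\mathbf e_i$ is the $i$-th standard basis vector, $(\Delta_{\mathbf{a}} f)(\mathbf{x}) = f(\mathbf{x}+\mathbf{a})-f(\mathbf{x})$, and $\Delta^{(k)}_{\mathbf{a}_1,\ldots,\mathbf{a}_k}=\Delta_{\mathbf{a}_1}\cdots\Delta_{\mathbf{a}_k}$. *)

(* Defs.v *)
From HB Require Import structures.
From mathcomp Require Import all_boot all_order all_algebra all_field.
Set Implicit Arguments. Unset Strict Implicit. Unset Printing Implicit Defensive.
Import GRing.Theory.
Local Open Scope ring_scope.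

(* A function GF(q)^n -> GF(q) is a map 'rV[F]_n -> F, F a finite field
   (every finite field is GF(p^m)).  Its reduced polynomial representative
   is given by a coefficient table indexed by exponent vectors
   e : 'I_n -> {0,...,q-1}, with q = #|F|. *)
Definition expvec (F : finFieldType) (n : nat) := {ffun 'I_n -> 'I_#|F|}.

Definition peval (F : finFieldType) (n : nat) (c : {ffun expvec F n -> F})
  (x : 'rV[F]_n) : F :=
  \sum_(e : expvec F n) c e * \prod_(i < n) x ord0 i ^+ (e i).

(* f_{S(I)} : f = t_I f_{S(I)} + r; f_{S(I)} collects the monomials of the
   representative divisible by t_I = prod_{i in I} x_i, divided by t_I. *)
Definition fS (F : finFieldType) (n : nat) (c : {ffun expvec F n -> F})
  (I : {set 'I_n}) (x : 'rV[F]_n) : F :=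
  \sum_(e : expvec F n | [forall i in I, 0 < e i]%N)
     c e * \prod_(i < n) x ord0 i ^+ (e i - (i \in I))%N.

Definition vvec (F : finFieldType) (n : nat) (I : {set 'I_n}) (x : 'rV[F]_n)
  : 'rV[F]_n := \row_j (if j \in I then 1 else x ord0 j).
Definition uvec (F : finFieldType) (n : nat) (I : {set 'I_n}) (x : 'rV[F]_n)
  : 'rV[F]_n := \row_j (if j \in I then 0 else x ord0 j).

Definition subst01 (F : finFieldType) (n : nat) (I J : {set 'I_n})
  (x : 'rV[F]_n) : 'rV[F]_n :=
  \row_j (if j \in I then (if j \in J then 1 else 0) else x ord0 j).

(* f_I = sum_{b in {0,1}^k} (-1)^{k - sum b} f|_{x_{i_l} = b_l};
   a vector b in {0,1}^k is encoded by the subset J = {i_l | b_l = 1} of I. *)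
Definition fI (F : finFieldType) (n : nat) (f : 'rV[F]_n -> F)
  (I : {set 'I_n}) (x : 'rV[F]_n) : F :=
  \sum_(J in powerset I) (-1) ^+ (#|I| - #|J|)%N * f (subst01 I J x).

Definition evec (F : finFieldType) (n : nat) (i : 'I_n) : 'rV[F]_n :=
  delta_mx 0 i.

Definition Delta (F : finFieldType) (n : nat) (a : 'rV[F]_n)
  (f : 'rV[F]_n -> F) : 'rV[F]_n -> F := fun x => f (x + a) - f x.

Definition DeltaI (F : finFieldType) (n : nat) (I : {set 'I_n})
  (f : 'rV[F]_n -> F) : 'rV[F]_n -> F :=
  foldr (fun i g => Delta (evec F i) g) f (enum I).

(* Main.v *)
Require Import Defs.
From HB Require Import structures.
From mathcomp Require Import all_boot all_order all_algebra all_field.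
Local Open Scope ring_scope.
Import GRing.Theory.

Section S.
Variables (F : finFieldType) (n : nat).
Local Notation D := (fun i (h : 'rV[F]_n -> F) => Delta (evec F i) h).

Lemma DeltaL_sum (E : finType) (s : seq 'I_n) (f : 'rV[F]_n -> F)
  (h : E -> 'rV[F]_n -> F) (c : E -> F) :
  (forall y, f y = \sum_e c e * h e y) ->
  forall y, foldr D f s y = \sum_e c e * foldr D (h e) s y.
Proof.
move=> hf; elim: s => [|a s IH] y /=; first exact: hf.
rewrite /Delta !IH -sumrB; apply: eq_bigr => e _; by rewrite mulrBr.
Qed.

Lemma DeltaL_prod (s : seq 'I_n) (g : 'I_n -> F -> F) : uniq s ->
  forall y, foldr D (fun y => \prod_i g i (y ord0 i)) s y =
  \prod_i (if i \in s then g i (y ord0 i + 1) - g i (y ord0 i)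
           else g i (y ord0 i)).
Proof.
elim: s => [|a s IH] /=.
  by move=> _ y; apply: eq_bigr => i _.
case/andP=> as_ us y; rewrite /Delta !IH //.
rewrite [in LHS](bigD1 a) //= [X in _ - X](bigD1 a) //= [in RHS](bigD1 a) //=.
rewrite (negbTE as_) inE eqxx /= /evec !mxE eqxx /=.
have -> : \prod_(i | i != a) (if i \in s then g i ((y + delta_mx 0 a) ord0 i + 1) - g i ((y + delta_mx 0 a) ord0 i) else g i ((y + delta_mx 0 a) ord0 i))
  = \prod_(i | i != a) (if i \in s then g i (y ord0 i + 1) - g i (y ord0 i) else g i (y ord0 i)).
  by apply: eq_bigr => i ia; rewrite !mxE /= (negbTE ia) addr0.
rewrite -mulrBl; congr (_ * _); apply: eq_bigr => i ia.
by rewrite inE (negbTE ia).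
Qed.
End S.

Lemma key (F : finFieldType) (n : nat) (z w : 'I_n -> F) (I : {set 'I_n}) :
  \sum_(J in powerset I) (-1) ^+ (#|I| - #|J|)%N *
     \prod_i (if i \in I then (if i \in J then 1 else z i) else w i)
  = \prod_i (if i \in I then 1 - z i else w i).
Proof.
transitivity (\prod_i ((if i \in I then 1 else 0) + (if i \in I then - z i else w i))); last first.
  by apply: eq_bigr => i _; case: (i \in I); rewrite ?add0r.
rewrite bigA_distr [RHS](bigID (fun J => J \in powerset I)) /=.
rewrite [X in _ = _ + X]big1 ?addr0; last first.
  move=> J; rewrite powersetE => /subsetPn [i iJ iI].
  by rewrite (bigD1 i) //= iJ (negbTE iI) mul0r.
apply: eq_bigr => J; rewrite powersetE => JI.
transitivity (\prod_i ((if i \in I :\: J then -1 else 1) *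
   (if i \in I then (if i \in J then 1 else z i) else w i))); last first.
  apply: eq_bigr => i _; rewrite inE.
  case iJ: (i \in J) => /=; first by rewrite (subsetP JI) // mul1r.
  by case: (i \in I); rewrite ?mulN1r ?mul1r.
rewrite big_split /= -big_mkcond /= prodr_const cardsD (setIidPr JI) //.
Qed.

Theorem mainTheorem3 (F : finFieldType) (n : nat) (f : 'rV[F]_n -> F)
  (c : {ffun expvec F n -> F}) (hc : forall x, f x = peval c x)
  (I : {set 'I_n}) (x : 'rV[F]_n) :
  fI f I x = DeltaI I f (uvec I x) /\ DeltaI I f (uvec I x) = fS c I (vvec I x).
Proof.
pose T := \sum_(e : expvec F n) c e *
   \prod_i (if i \in I then 1 - 0 ^+ e i else x ord0 i ^+ e i).
have HD : DeltaI I f (uvec I x) = T.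
  rewrite /DeltaI (@DeltaL_sum F n (expvec F n) _ f (fun (e : expvec F n) y => \prod_i y ord0 i ^+ e i) c); last first.
    by move=> y; rewrite hc.
  apply: eq_bigr => e _; congr (_ * _).
  rewrite (@DeltaL_prod F n _ (fun i t => t ^+ e i)) ?enum_uniq //.
  apply: eq_bigr => i _; rewrite mem_enum !mxE.
  by case: (i \in I); rewrite ?add0r ?expr1n.
have HS : fS c I (vvec I x) = T.
  rewrite /fS big_mkcond; apply: eq_bigr => e _.
  case: forallP => [Hp | Hn].
    congr (_ * _); apply: eq_bigr => i _; rewrite !mxE.
    case iI: (i \in I); last by rewrite subn0.
    have := Hp i; rewrite iI /= => ei.
    by rewrite expr1n expr0n eqn0Ngt ei subr0.
  have [i] : exists i, ~~ ((i \in I) ==> (0 < e i)%N).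
    by apply/existsP; rewrite -negb_forall; apply/forallP.
  rewrite negb_imply => /andP [iI ei].
  by rewrite (bigD1 i) //= iI expr0n eqn0Ngt ei subrr mul0r mulr0.
have HI : fI f I x = T.
  rewrite /fI.
  under eq_bigr => J _ do rewrite hc /peval mulr_sumr.
  rewrite exchange_big /=; apply: eq_bigr => e _.
  under eq_bigr => J _ do rewrite mulrCA.
  rewrite -mulr_sumr; congr (_ * _).
  rewrite -(@key F n (fun i => 0 ^+ e i) (fun i => x ord0 i ^+ e i) I).
  apply: eq_bigr => J _; congr (_ * _); apply: eq_bigr => i _.
  rewrite !mxE; case: (i \in I) => //; case: (i \in J) => //.
  by rewrite expr1n.
by rewrite HI HD HS.
Qed.
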